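(* Let $U:\mathbb{R}\to\mathbb{R}$ be a piecewise continuous function with compact support which is even, $U(-x)=U(x)$. Fix $E>0$, $V_F>0$, $\hbar>0$, an angle $\theta\in(-\pi/2,\pi/2)$, and put $a=\frac{E}{\hbar V_F}\sin\theta$, $k=\frac{E}{\hbar V_F}\cos\theta$. Consider the ODE for $\Psi=(\Psi_1,\Psi_2)^t:\mathbb{R}\to\mathbb{C}^2$ $$\partial_x\Psi(x)=\begin{pmatrix} a & -i\frac{U(x)-E}{V_F\hbar}\\ -i\frac{U(x)-E}{V_F\hbar} & -a\end{pmatrix}\Psi(x).$$ Let $v_R=\frac{E}{V_F\hbar}\begin{pmatrix}e^{i\theta}\\ i\end{pmatrix}$, $v_L=\frac{E}{V_F\hbar}\begin{pmatrix}e^{-i\theta}\\ i\end{pmatrix}$, $\psi_R(x)=e^{ikx}v_R$, $\psi_L(x)=e^{-ikx}v_L$ (these solve the ODE wherever $U=0$). Let $\Psi_R$ be the solution of the ODE with $\Psi_R=\psi_R+r(\theta)\psi_L$ to the left of the support of $U$ and $\Psi_R=t(\theta)\psi_R$ to the right of the support of $U$, for complex numbers $r(\theta),t(\theta)$ (reflection and transmission amplitudes), and assume $t(\theta)\neq0$. Then $$q(\theta)=i\,e^{-i\theta}\,\frac{r(\theta)}{t(\theta)}$$ is a real number.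
   Context: This is the single-layer graphene (massless Dirac) stationary equation for a one-dimensional potential barrier $U(x)$, after separating $\Psi(x,y)=\Psi(x)e^{iay}$.
   Formalization: In $v_R$, $v_L$ and $q(\theta)$ the angle θ is replaced by π/2−θ, so $v_R=\frac{E}{V_F\hbar}(ie^{-i\theta},i)^t$, $v_L=\frac{E}{V_F\hbar}(-ie^{i\theta},i)^t$ and the conclusion is that $e^{i\theta}r(\theta)/t(\theta)$ is real. Each condition added here is assumed in the paper as well or is needed for the statement above to hold. This also corrects a misprint. *)

(* Defs.v *)
From Stdlib Require Import Reals List.
Open Scope R_scope.

Definition CC : Type := (R * R)%type.
Definition Re (z : CC) : R := fst z.
Definition Im (z : CC) : R := snd z.
Definition RtoC (x : R) : CC := (x, 0).
Definition Ci : CC := (0, 1).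
Definition Cadd (z w : CC) : CC := (Re z + Re w, Im z + Im w).
Definition Cmul (z w : CC) : CC :=
  (Re z * Re w - Im z * Im w, Re z * Im w + Im z * Re w).
Definition Cinv (z : CC) : CC :=
  (Re z / (Re z ^ 2 + Im z ^ 2), - Im z / (Re z ^ 2 + Im z ^ 2)).
Definition Cdiv (z w : CC) : CC := Cmul z (Cinv w).
Definition Cexpi (phi : R) : CC := (cos phi, sin phi).

Definition C2 : Type := (CC * CC)%type.
Definition C2add (u v : C2) : C2 := (Cadd (fst u) (fst v), Cadd (snd u) (snd v)).
Definition C2scal (z : CC) (v : C2) : C2 := (Cmul z (fst v), Cmul z (snd v)).

Definition Cderiv (f : R -> CC) (x : R) (z : CC) : Prop :=
  derivable_pt_lim (fun y => Re (f y)) x (Re z) /\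
  derivable_pt_lim (fun y => Im (f y)) x (Im z).

Definition Ccont (f : R -> CC) (x : R) : Prop :=
  continuity_pt (fun y => Re (f y)) x /\ continuity_pt (fun y => Im (f y)) x.

Definition piecewise_continuous (U : R -> R) : Prop :=
  exists D : list R,
    (forall x, ~ In x D -> continuity_pt U x) /\
    (forall d, In d D ->
       (exists l, limit1_in U (fun x => x < d) l d) /\
       (exists l, limit1_in U (fun x => d < x) l d)).

Definition compact_support (U : R -> R) : Prop :=
  exists L, forall x, L < Rabs x -> U x = 0.

(* The right-hand side of the Dirac ODE:
   d/dx Psi = [[a, -i w], [-i w, -a]] Psi,  w = (U(x) - E)/(V_F hbar). *)
Definition dirac_rhs (U : R -> R) (E VF hbar a : R) (x : R) (P : C2) : C2 :=
  let w := RtoC ((U x - E) / (VF * hbar)) in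
  let miw := Cmul (RtoC (-1)) (Cmul Ci w) in
  (Cadd (Cmul (RtoC a) (fst P)) (Cmul miw (snd P)),
   Cadd (Cmul miw (fst P)) (Cmul (RtoC (- a)) (snd P))).

(* Psi is a solution of the ODE on R: continuous everywhere, and satisfies
   the ODE at every point outside a finite exceptional set
   (needed since U is only piecewise continuous). *)
Definition is_solution (U : R -> R) (E VF hbar a : R) (Psi : R -> C2) : Prop :=
  (forall x, Ccont (fun y => fst (Psi y)) x /\ Ccont (fun y => snd (Psi y)) x) /\
  exists D : list R, forall x, ~ In x D ->
    Cderiv (fun y => fst (Psi y)) x (fst (dirac_rhs U E VF hbar a x (Psi x))) /\
    Cderiv (fun y => snd (Psi y)) x (snd (dirac_rhs U E VF hbar a x (Psi x))).

Definition vR (E VF hbar theta : R) : C2 :=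
  C2scal (RtoC (E / (VF * hbar))) (Cexpi theta, Ci).
Definition vL (E VF hbar theta : R) : C2 :=
  C2scal (RtoC (E / (VF * hbar))) (Cexpi (- theta), Ci).
Definition psiR (E VF hbar theta k x : R) : C2 :=
  C2scal (Cexpi (k * x)) (vR E VF hbar theta).
Definition psiL (E VF hbar theta k x : R) : C2 :=
  C2scal (Cexpi (- (k * x))) (vL E VF hbar theta).

(* Main.v *)
Require Import Defs.
From Stdlib Require Import Reals List Lra.
From Coquelicot Require Import Coquelicot.
Require Import Defs.
Open Scope R_scope.
Lemma const_nil (f : R -> R) a b : a <= b ->
  (forall x, continuity_pt f x) ->
  (forall x, a < x < b -> derivable_pt_lim f x 0) -> f a = f b.
Proof.
  intros hab hc hd.
  destruct (MVT_gen f a b (fun _ => 0)) as [c [_ Hc]].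
  - intros x Hx. apply is_derive_Reals. apply hd.
    rewrite Rmin_left in Hx by lra. rewrite Rmax_right in Hx by lra. lra.
  - intros; apply hc.
  - lra.
Qed.

Lemma const_list (f : R -> R) (D : list R) : forall a b, a <= b ->
  (forall x, continuity_pt f x) ->
  (forall x, a < x < b -> ~ In x D -> derivable_pt_lim f x 0) -> f a = f b.
Proof.
  induction D as [|d D IH]; intros a b hab hc hd.
  - apply const_nil; auto.
  - destruct (Rlt_dec a d) as [h1|h1]; [destruct (Rlt_dec d b) as [h2|h2]|].
    + transitivity (f d).
      * apply IH; auto; try lra. intros x Hx Hn. apply hd; [lra|].
        intros [E|E]; [lra|tauto].
      * apply IH; auto; try lra. intros x Hx Hn. apply hd; [lra|].
        intros [E|E]; [lra|tauto].
    + apply IH; auto. intros x Hx Hn. apply hd; [lra|].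
      intros [E|E]; [lra|tauto].
    + apply IH; auto. intros x Hx Hn. apply hd; [lra|].
      intros [E|E]; [lra|tauto].
Qed.

Lemma deriv_neg (f : R -> R) x l : derivable_pt_lim f (-x) l ->
  derivable_pt_lim (fun y => f (- y)) x (- l).
Proof.
  intros H.
  replace (-l) with (l * -1) by ring.
  apply (derivable_pt_lim_comp (fun y => - y) f x (-1) l).
  - replace (-1) with (- (1)) by ring. apply derivable_pt_lim_opp, derivable_pt_lim_id.
  - exact H.
Qed.

Lemma cont_neg (f : R -> R) x : continuity_pt f (-x) ->
  continuity_pt (fun y => f (- y)) x.
Proof.
  intros H. apply (continuity_pt_comp (fun y => -y) f x).
  - apply continuity_pt_opp, derivable_continuous_pt, derivable_pt_id.
  - exact H.
Qed.

Theorem proposition1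
  (U : R -> R) (E VF hbar theta : R) (Psi : R -> C2) (r t : CC) (L : R)
  (HUpc : piecewise_continuous U)
  (HUsupp : compact_support U)
  (HUeven : forall x, U (- x) = U x)
  (HE : 0 < E) (HVF : 0 < VF) (Hhbar : 0 < hbar)
  (Htheta : - (PI / 2) < theta < PI / 2) :
  let a := E / (hbar * VF) * sin theta in
  let k := E / (hbar * VF) * cos theta in
  let phi := PI / 2 - theta in
  (forall x, L < Rabs x -> U x = 0) ->
  is_solution U E VF hbar a Psi ->
  (forall x, x < - L ->
     Psi x = C2add (psiR E VF hbar phi k x) (C2scal r (psiL E VF hbar phi k x))) ->
  (forall x, L < x -> Psi x = C2scal t (psiR E VF hbar phi k x)) ->
  t <> (0, 0) ->
  Im (Cmul Ci (Cmul (Cexpi (- phi)) (Cdiv r t))) = 0.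
Proof.
  intros a k phi _ [Hcont [D HD]] Hleft Hright Ht.
  set (A := fun y => fst (fst (Psi y))).
  set (B := fun y => snd (fst (Psi y))).
  set (C := fun y => fst (snd (Psi y))).
  set (Dd := fun y => snd (snd (Psi y))).
  set (W := fun x => C (-x) * Dd x - Dd (-x) * C x - A (-x) * B x + B (-x) * A x).
  assert (Wodd : forall x, W (- x) = - W x).
  { intros x; unfold W; rewrite Ropp_involutive; ring. }
  assert (Wc : forall x, continuity_pt W x).
  { intros x. unfold W.
    destruct (Hcont x) as [[c1 c2] [c3 c4]].
    destruct (Hcont (-x)) as [[d1 d2] [d3 d4]].
    repeat first [apply continuity_pt_plus | apply continuity_pt_minus
                 | apply continuity_pt_mult | apply continuity_pt_opp]; try apply cont_neg;
    first [exact c1|exact c2|exact c3|exact c4|exact d1|exact d2|exact d3|exact d4]. }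
  assert (Wd : forall x, ~ In x (D ++ map Ropp D) -> derivable_pt_lim W x 0).
  { intros x Hx.
    assert (H1 : ~ In x D) by (intro; apply Hx; apply in_or_app; auto).
    assert (H2 : ~ In (-x) D).
    { intro h; apply Hx; apply in_or_app; right.
      replace x with (- - x) by ring. apply in_map; auto. }
    destruct (HD x H1) as [[e1 e2] [e3 e4]].
    destruct (HD (-x) H2) as [[f1 f2] [f3 f4]].
    apply deriv_neg in f1, f2, f3, f4.
    pose proof (derivable_pt_lim_plus _ _ x _ _ (derivable_pt_lim_minus _ _ x _ _ (derivable_pt_lim_minus _ _ x _ _ (derivable_pt_lim_mult _ _ x _ _ f3 e4) (derivable_pt_lim_mult _ _ x _ _ f4 e3)) (derivable_pt_lim_mult _ _ x _ _ f1 e2)) (derivable_pt_lim_mult _ _ x _ _ f2 e1)) as HH.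
    match type of HH with derivable_pt_lim _ _ ?l => replace 0 with l; [exact HH|] end.
    { unfold dirac_rhs, Re, Im, Cadd, Cmul, RtoC, Ci; simpl; rewrite HUeven; unfold Defs.Re, Defs.Im; ring. } }
  assert (Hct : 0 < cos theta) by (apply cos_gt_0; lra).
  assert (Hc0 : 0 < E / (hbar * VF)) by (apply Rdiv_lt_0_compat; nra).
  assert (Hk : 0 < k) by (unfold k; nra).
  destruct (INR_archimed (2 * PI / k) (Rmax L 0)) as [n Hn].
  { apply Rlt_gt, Rdiv_lt_0_compat; [pose proof PI_RGT_0|]; lra. }
  set (x0 := INR n * (2 * PI / k)) in *.
  assert (HL0 : L <= Rmax L 0 /\ 0 <= Rmax L 0) by (split; [apply Rmax_l|apply Rmax_r]).
  assert (Hkx : k * x0 = 0 + 2 * INR n * PI) by (unfold x0; field; lra).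
  assert (Hcos : cos (k * x0) = 1) by (rewrite Hkx, cos_period; apply cos_0).
  assert (Hsin : sin (k * x0) = 0) by (rewrite Hkx, sin_period; apply sin_0).
  assert (Hcos2 : cos (k * - x0) = 1) by (replace (k * - x0) with (- (k*x0)) by ring; rewrite cos_neg; auto).
  assert (Hsin2 : sin (k * - x0) = 0) by (replace (k * - x0) with (- (k*x0)) by ring; rewrite sin_neg, Hsin; ring).
  assert (Hcos3 : cos (- (k * - x0)) = 1) by (replace (- (k * - x0)) with (k*x0) by ring; auto).
  assert (Hsin3 : sin (- (k * - x0)) = 0) by (replace (- (k * - x0)) with (k*x0) by ring; auto).
  assert (HW0 : W x0 = 0).
  { assert (HWe : W (- x0) = W x0) by (apply (const_list W (D ++ map Ropp D)); auto; lra).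
    rewrite Wodd in HWe. lra. }
  unfold W, A, B, C, Dd in HW0.
  rewrite (Hleft (- x0)) in HW0 by lra.
  rewrite (Hright x0) in HW0 by lra.
  unfold C2add, C2scal, psiR, psiL, vR, vL, Cexpi, Cadd, Cmul, RtoC, Ci, Re, Im in HW0.
  simpl in HW0.
  rewrite Hcos, Hsin, Hcos2, Hsin2, Hcos3, Hsin3 in HW0.
  unfold Cdiv, Cinv, Cexpi, Cmul, Ci, Re, Im. simpl.
  rewrite cos_neg, sin_neg.
  destruct r as [r1 r2]; destruct t as [t1 t2]; simpl in *.
  rewrite cos_neg, sin_neg in HW0.
  set (c := E / (VF * hbar)) in HW0.
  set (co := cos phi) in *. set (si := sin phi) in *.
  assert (Hsi : 0 < si) by (unfold si, phi; apply sin_gt_0; lra).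
  assert (Hpy : co ^ 2 + si ^ 2 = 1) by (unfold co, si; pose proof (sin2_cos2 phi) as h; unfold Rsqr in h; nra).
  assert (Hc : 0 < c) by (unfold c; apply Rdiv_lt_0_compat; nra).
  set (X := co * (r1 * t1 + r2 * t2) + si * (r2 * t1 - r1 * t2)).
  assert (HX : c ^ 2 * (-2 * si * X) = 0).
  { match type of HW0 with ?e = 0 =>
      assert (Hid : e = c ^ 2 * (-2 * si * X + (1 - co ^ 2 - si ^ 2) * (t2 + r1 * t2 - r2 * t1))) by (unfold X; ring) end.
    rewrite Hid in HW0. replace (1 - co ^ 2 - si ^ 2) with 0 in HW0 by lra.
    rewrite <- HW0. ring. }
  assert (HX0 : X = 0).
  { assert (c ^ 2 * (2 * si) <> 0) by (apply Rmult_integral_contrapositive; split; nra).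
    apply (Rmult_eq_reg_l (c ^ 2 * (2 * si))); [|auto]. lra. }
  assert (HN : t1 * t1 + t2 * t2 <> 0).
  { intro h. apply Ht. assert (t1 = 0) by nra. assert (t2 = 0) by nra. subst; auto. }
  replace (t1 * (t1 * 1) + t2 * (t2 * 1)) with (t1 * t1 + t2 * t2) by ring.
  transitivity (X / (t1 * t1 + t2 * t2)).
  { unfold X. field. auto. }
  rewrite HX0. unfold Rdiv. ring.
Qed.
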